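(* Let $c_0,\delta,\tilde\beta$ be positive constants and consider the Khokhlov–Zabolotskaya–Kuznetsov equation $$E:=\delta p_{ttt}+\tilde\beta\,(p^2)_{tt}-2c_0^3p_{zt}+c_0^4(p_{xx}+p_{yy})=0$$ for $p(x,y,z,t)$. A function $\Lambda(x,y,z,t,p,p_x,p_y,p_z,p_t)$ is a multiplier, i.e. $\mathcal{E}_p[\Lambda E]=0$ identically, if and only if $$\Lambda=\phi(x,y,z)+t\,\psi(x,y,z),\qquad\text{where}\quad \phi_{xx}+\phi_{yy}=\tfrac{2}{c_0}\psi_z,\quad \psi_{xx}+\psi_{yy}=0.$$ For any such $\phi,\psi$, every smooth solution $p$ of $E=0$ satisfies $$\partial_tT^t+\partial_xT^x+\partial_yT^y+\partial_zT^z=0$$ with $$T^t=(\phi+t\psi)(\delta p_{tt}+2\tilde\beta pp_t-2c_0^3p_z)-\psi(\delta p_t+\tilde\beta p^2),$$ $$T^x=c_0^4\big[(\phi+t\psi)p_x-p(\phi_x+t\psi_x)\big],\quad T^y=c_0^4\big[(\phi+t\psi)p_y-p(\phi_y+t\psi_y)\big],\quad T^z=2c_0^3p\psi.$$ In particular, the equation has infinitely many conservation laws.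
   Context: $\mathcal{E}_p=\sum(-D_x)^k(-D_y)^\ell(-D_z)^m(-D_t)^n\,\partial/\partial p_{kx\,\ell y\,mz\,nt}$ is the Euler (variational) operator with respect to $p$, where $D_x,D_y,D_z,D_t$ are total derivatives on the jet space; $\Lambda E$ is a total divergence iff $\mathcal{E}_p[\Lambda E]=0$ identically. Subscripts denote partial derivatives. *)

(* Defs.v *)
From Stdlib Require Import Reals List.
From Coquelicot Require Import Coquelicot.
Open Scope R_scope.

(* A function of n real variables is represented as f : (nat -> R) -> R reading
   only the coordinates 0..n-1. *)
Definition upd (v : nat -> R) (i : nat) (s : R) : nat -> R :=
  fun j => if Nat.eqb j i then s else v j.

Definition pd (i : nat) (f : (nat -> R) -> R) : (nat -> R) -> R :=
  fun v => Derive (fun s => f (upd v i s)) (v i).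

Fixpoint pds (l : list nat) (f : (nat -> R) -> R) : (nat -> R) -> R :=
  match l with nil => f | i :: l' => pd i (pds l' f) end.

Definition cont_n (n : nat) (f : (nat -> R) -> R) : Prop :=
  forall v eps, 0 < eps -> exists del, 0 < del /\
    forall w, (forall i, (i < n)%nat -> Rabs (w i - v i) < del) ->
      Rabs (f w - f v) < eps.

Definition smooth_n (n : nat) (f : (nat -> R) -> R) : Prop :=
  forall l : list nat, List.Forall (fun i => (i < n)%nat) l ->
    cont_n n (pds l f) /\
    forall v i, (i < n)%nat -> ex_derive (fun s => pds l f (upd v i s)) (v i).

Definition smooth3 (f : R -> R -> R -> R) : Prop :=
  smooth_n 3 (fun v => f (v 0%nat) (v 1%nat) (v 2%nat)).
Definition smooth4 (f : R -> R -> R -> R -> R) : Prop :=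
  smooth_n 4 (fun v => f (v 0%nat) (v 1%nat) (v 2%nat) (v 3%nat)).
Definition smooth9 (f : R -> R -> R -> R -> R -> R -> R -> R -> R -> R) : Prop :=
  smooth_n 9 (fun v => f (v 0%nat) (v 1%nat) (v 2%nat) (v 3%nat) (v 4%nat)
                         (v 5%nat) (v 6%nat) (v 7%nat) (v 8%nat)).

(* A point of the (infinite) jet space: base point (x,y,z,t) and the values
   ju k l m n = p_{kx ly mz nt}. *)
Record jet := Jet { jx : R; jy : R; jz : R; jt : R;
                    ju : nat -> nat -> nat -> nat -> R }.

Definition difffun := jet -> R.

Definition base (i : nat) (J : jet) : R :=
  match i with 0 => jx J | 1 => jy J | 2 => jz J | _ => jt J end.

Definition set_base (i : nat) (s : R) (J : jet) : jet :=
  match i with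
  | 0 => Jet s (jy J) (jz J) (jt J) (ju J)
  | 1 => Jet (jx J) s (jz J) (jt J) (ju J)
  | 2 => Jet (jx J) (jy J) s (jt J) (ju J)
  | _ => Jet (jx J) (jy J) (jz J) s (ju J)
  end.

Definition set_u (k l m n : nat) (s : R) (J : jet) : jet :=
  Jet (jx J) (jy J) (jz J) (jt J)
      (fun a b c d => if andb (andb (Nat.eqb a k) (Nat.eqb b l)) (andb (Nat.eqb c m) (Nat.eqb d n))
                      then s else ju J a b c d).

Definition dbase (i : nat) (F : difffun) : difffun :=
  fun J => Derive (fun s => F (set_base i s J)) (base i J).
Definition du (k l m n : nat) (F : difffun) : difffun :=
  fun J => Derive (fun s => F (set_u k l m n s J)) (ju J k l m n).

Definition sum_box (N : nat) (g : nat -> nat -> nat -> nat -> R) : R :=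
  sum_f_R0 (fun k => sum_f_R0 (fun l => sum_f_R0 (fun m =>
    sum_f_R0 (fun n => g k l m n) N) N) N) N.

Definition e (i j : nat) : nat := if Nat.eqb i j then 1%nat else 0%nat.

(* All differential functions occurring
   below (Lambda*E, of order 3, and at most 3 total derivatives of its partials)
   depend only on jet coordinates p_{kx ly mz nt} with k,l,m,n <= 6, so the
   truncated total derivative is the exact total derivative on them. *)
Definition jet_trunc : nat := 6.

Definition D (i : nat) (F : difffun) : difffun :=
  fun J => dbase i F J +
    sum_box jet_trunc (fun k l m n =>
      ju J (k + e i 0) (l + e i 1) (m + e i 2) (n + e i 3) * du k l m n F J).

Fixpoint iterD (i n : nat) (F : difffun) : difffun :=
  match n with 0 => F | S n' => D i (iterD i n' F) end.

Definition euler (F : difffun) : difffun :=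
  fun J => sum_box jet_trunc (fun k l m n =>
    (-1) ^ (k + l + m + n) *
    iterD 0 k (iterD 1 l (iterD 2 m (iterD 3 n (du k l m n F)))) J).

(* the KZK equation as a differential function:
   E = delta p_ttt + beta (p^2)_tt - 2 c0^3 p_zt + c0^4 (p_xx + p_yy),
   with (p^2)_tt = 2 p_t^2 + 2 p p_tt on the jet space *)
Definition KZK_E (c0 delta beta : R) : difffun :=
  fun J => delta * ju J 0 0 0 3
         + beta * (2 * (ju J 0 0 0 1) ^ 2 + 2 * ju J 0 0 0 0 * ju J 0 0 0 2)
         - 2 * c0 ^ 3 * ju J 0 0 1 1
         + c0 ^ 4 * (ju J 2 0 0 0 + ju J 0 2 0 0).

Definition lam_jet (Lam : R -> R -> R -> R -> R -> R -> R -> R -> R -> R) : difffun :=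
  fun J => Lam (jx J) (jy J) (jz J) (jt J) (ju J 0 0 0 0)
               (ju J 1 0 0 0) (ju J 0 1 0 0) (ju J 0 0 1 0) (ju J 0 0 0 1).

Definition is_multiplier (c0 delta beta : R)
  (Lam : R -> R -> R -> R -> R -> R -> R -> R -> R -> R) : Prop :=
  forall J, euler (fun J' => lam_jet Lam J' * KZK_E c0 delta beta J') J = 0.

Definition d3x (f : R -> R -> R -> R) : R -> R -> R -> R :=
  fun x y z => Derive (fun s => f s y z) x.
Definition d3y (f : R -> R -> R -> R) : R -> R -> R -> R :=
  fun x y z => Derive (fun s => f x s z) y.
Definition d3z (f : R -> R -> R -> R) : R -> R -> R -> R :=
  fun x y z => Derive (fun s => f x y s) z.

Definition d4x (f : R -> R -> R -> R -> R) : R -> R -> R -> R -> R :=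
  fun x y z t => Derive (fun s => f s y z t) x.
Definition d4y (f : R -> R -> R -> R -> R) : R -> R -> R -> R -> R :=
  fun x y z t => Derive (fun s => f x s z t) y.
Definition d4z (f : R -> R -> R -> R -> R) : R -> R -> R -> R -> R :=
  fun x y z t => Derive (fun s => f x y s t) z.
Definition d4t (f : R -> R -> R -> R -> R) : R -> R -> R -> R -> R :=
  fun x y z t => Derive (fun s => f x y z s) t.

Definition KZK_op (c0 delta beta : R) (p : R -> R -> R -> R -> R) : R -> R -> R -> R -> R :=
  fun x y z t =>
    delta * d4t (d4t (d4t p)) x y z t
    + beta * d4t (d4t (fun x' y' z' t' => (p x' y' z' t') ^ 2)) x y z t
    - 2 * c0 ^ 3 * d4z (d4t p) x y z t
    + c0 ^ 4 * (d4x (d4x p) x y z t + d4y (d4y p) x y z t).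

Definition Tt (c0 delta beta : R) (phi psi : R -> R -> R -> R)
  (p : R -> R -> R -> R -> R) : R -> R -> R -> R -> R :=
  fun x y z t =>
    (phi x y z + t * psi x y z) *
      (delta * d4t (d4t p) x y z t + 2 * beta * p x y z t * d4t p x y z t
       - 2 * c0 ^ 3 * d4z p x y z t)
    - psi x y z * (delta * d4t p x y z t + beta * (p x y z t) ^ 2).
Definition Tx (c0 : R) (phi psi : R -> R -> R -> R)
  (p : R -> R -> R -> R -> R) : R -> R -> R -> R -> R :=
  fun x y z t => c0 ^ 4 * ((phi x y z + t * psi x y z) * d4x p x y z t
                  - p x y z t * (d3x phi x y z + t * d3x psi x y z)).
Definition Ty (c0 : R) (phi psi : R -> R -> R -> R)
  (p : R -> R -> R -> R -> R) : R -> R -> R -> R -> R :=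
  fun x y z t => c0 ^ 4 * ((phi x y z + t * psi x y z) * d4y p x y z t
                  - p x y z t * (d3y phi x y z + t * d3y psi x y z)).
Definition Tz (c0 : R) (psi : R -> R -> R -> R)
  (p : R -> R -> R -> R -> R) : R -> R -> R -> R -> R :=
  fun x y z t => 2 * c0 ^ 3 * p x y z t * psi x y z.

(* Main.v *)
Require Import Defs.
From Stdlib Require Import Reals List Lia ZArith Lra FunctionalExtensionality Bool.
From Coquelicot Require Import Coquelicot.
Open Scope R_scope.

Lemma upd_eq v i s : upd v i s i = s.
Proof. unfold upd. now rewrite Nat.eqb_refl. Qed.
Lemma upd_neq v i j s : j <> i -> upd v i s j = v j.
Proof. intros H. unfold upd. apply Nat.eqb_neq in H. now rewrite H. Qed.
Lemma upd_comm v i j s r : i <> j -> upd (upd v i s) j r = upd (upd v j r) i s.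
Proof. intros H; apply functional_extensionality; intro k; unfold upd.
 destruct (Nat.eqb_spec k j), (Nat.eqb_spec k i); subst; try lia; reflexivity. Qed.
Lemma upd_upd v i s r : upd (upd v i s) i r = upd v i r.
Proof. apply functional_extensionality; intro k; unfold upd.
 destruct (Nat.eqb_spec k i); reflexivity. Qed.
Lemma upd_id v i : upd v i (v i) = v.
Proof. apply functional_extensionality; intro k; unfold upd.
 destruct (Nat.eqb_spec k i); subst; reflexivity. Qed.

Definition indep (f : (nat->R)->R) j := forall v s, f (upd v j s) = f v.

Lemma pd_ext i f g : (forall v, f v = g v) -> forall v, pd i f v = pd i g v.
Proof. intros H v; unfold pd; apply Derive_ext; intro; apply H. Qed.

Lemma pd_indep_zero f j : indep f j -> forall v, pd j f v = 0.
Proof. intros H v; unfold pd. rewrite (Derive_ext _ (fun _ => f v)).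
 apply Derive_const. intro; apply H. Qed.

Lemma pd_zero i f : (forall v, f v = 0) -> forall v, pd i f v = 0.
Proof. intros H v; unfold pd. rewrite (Derive_ext _ (fun _ => 0)).
 apply Derive_const. intro; apply H. Qed.

Lemma indep_pd f i j : indep f j -> indep (pd i f) j.
Proof. intros H v s. destruct (Nat.eq_dec i j).
 - subst. now rewrite !pd_indep_zero.
 - unfold pd. rewrite upd_neq by auto. apply Derive_ext; intro r.
   rewrite upd_comm by auto. apply H.
Qed.

Lemma indep_pds f j l : indep f j -> indep (pds l f) j.
Proof. induction l; simpl; auto using indep_pd. Qed.

Lemma pds_zero_in f j l : indep f j -> In j l -> forall v, pds l f v = 0.
Proof. induction l as [|a l IH]; simpl; [tauto|]. intros H [->|Hin] v.
 - apply pd_indep_zero, indep_pds, H.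
 - apply pd_zero. intro; apply IH; auto. Qed.

Lemma pds_app l1 l2 f : pds (l1 ++ l2) f = pds l1 (pds l2 f).
Proof. induction l1; simpl; congruence. Qed.

Lemma smooth_ex_derive n f l v i : smooth_n n f -> List.Forall (fun i => (i<n)%nat) l ->
  (i<n)%nat -> ex_derive (fun s => pds l f (upd v i s)) (v i).
Proof. intros H Hl Hi. apply (proj2 (H l Hl)). exact Hi. Qed.

Lemma smooth_is_derive n f l v i : smooth_n n f -> List.Forall (fun i => (i<n)%nat) l ->
  (i<n)%nat -> is_derive (fun s => pds l f (upd v i s)) (v i) (pds (i::l) f v).
Proof. intros H Hl Hi. apply Derive_correct. now apply (smooth_ex_derive n). Qed.

Lemma smooth_pd n f i : smooth_n n f -> (i<n)%nat -> smooth_n n (pd i f).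
Proof. intros H Hi l Hl. replace (pds l (pd i f)) with (pds (l ++ i :: nil) f)
  by (rewrite pds_app; reflexivity). apply H. apply List.Forall_app; auto. Qed.

Lemma smooth_is_derive_at n f l v i s : smooth_n n f -> List.Forall (fun i => (i<n)%nat) l ->
  (i<n)%nat -> is_derive (fun r => pds l f (upd v i r)) s (pds (i::l) f (upd v i s)).
Proof. intros H Hl Hi. pose proof (smooth_is_derive n f l (upd v i s) i H Hl Hi) as K.
 rewrite upd_eq in K. eapply is_derive_ext; [|exact K]. intro r; simpl. now rewrite upd_upd. Qed.

Lemma indep_of_pd_zero n f i : smooth_n n f -> (i<n)%nat ->
  (forall v, pd i f v = 0) -> indep f i.
Proof. intros H Hi Z v s.
 assert (K : forall a b, a < b -> f (upd v i a) = f (upd v i b)).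
 { intros a b Hab. apply (eq_is_derive (fun r => f (upd v i r))); [|exact Hab].
   intros t _. pose proof (smooth_is_derive_at n f nil v i t H (List.Forall_nil _) Hi) as K.
   simpl in K. rewrite Z in K. exact K. }
 rewrite <- (upd_id v i) at 2.
 destruct (Rtotal_order s (v i)) as [h|[h|h]].
 - now apply K. - now rewrite h. - symmetry; now apply K. Qed.

Definition trunc (v : nat -> R) : nat -> R := fun i => match i with
 | 0 => v 0%nat | 1 => v 1%nat | 2 => v 2%nat | 3 => v 3%nat | 4 => v 4%nat | 5 => v 5%nat
 | 6 => v 6%nat | 7 => v 7%nat | 8 => v 8%nat | _ => 0 end.

Lemma trunc_upd v a s : (a < 9)%nat -> trunc (upd v a s) = upd (trunc v) a s.
Proof. intros Ha. apply functional_extensionality; intro i.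
 do 9 (destruct a as [|a]; [destruct i as [|[|[|[|[|[|[|[|[|i]]]]]]]]]; reflexivity|]). lia. Qed.
Lemma trunc_at v a : (a < 9)%nat -> trunc v a = v a.
Proof. intros Ha. do 9 (destruct a as [|a]; [reflexivity|]). lia. Qed.

Lemma pds_trunc f : (forall v, f v = f (trunc v)) ->
  forall l, List.Forall (fun i => (i < 9)%nat) l -> forall v, pds l f v = pds l f (trunc v).
Proof. intros Hf l; induction l as [|a l IH]; simpl; intros Hl v; auto.
 inversion Hl; subst. unfold pd. rewrite (trunc_at v a) by auto.
 apply Derive_ext; intro s. rewrite IH by auto. rewrite trunc_upd by auto. reflexivity. Qed.

Lemma pds_fix f j c l : ~ In j l ->
  forall v, pds l (fun w => f (upd w j c)) v = pds l f (upd v j c).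
Proof. induction l as [|a l IH]; simpl; intros Hn v; auto.
 unfold pd. rewrite <- (upd_neq v j a c) by (intro; apply Hn; auto).
 apply Derive_ext; intro s. rewrite IH by tauto. rewrite upd_comm by (intro; apply Hn; auto).
 reflexivity. Qed.

Lemma indep_fix f j c : indep (fun w => f (upd w j c)) j.
Proof. intros v s. simpl. now rewrite upd_upd. Qed.

Lemma cont_n_const n c : cont_n n (fun _ => c).
Proof. intros v eps He. exists 1; split; [lra|]. intros. rewrite Rminus_diag, Rabs_R0. lra. Qed.

Lemma smooth_fix n f j c : smooth_n n f -> (j < n)%nat -> smooth_n n (fun w => f (upd w j c)).
Proof. intros H Hj l Hl. destruct (in_dec Nat.eq_dec j l) as [Hin|Hn].
 - assert (Z : forall v, pds l (fun w => f (upd w j c)) v = 0)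
     by (apply pds_zero_in with j; auto; apply indep_fix).
   split.
   + intros v eps He. exists 1; split; [lra|]. intros. rewrite !Z, Rminus_diag, Rabs_R0. lra.
   + intros v i Hi. apply (ex_derive_ext (fun _ => 0)). intro; now rewrite Z. apply ex_derive_const.
 - destruct (H l Hl) as [Hc Hd]. split.
   + intros v eps He. destruct (Hc (upd v j c) eps He) as [del [Hdel Hw]].
     exists del; split; auto. intros w Hwv. rewrite !pds_fix by auto. apply Hw.
     intros i Hi. unfold upd. destruct (Nat.eqb i j). rewrite Rminus_diag, Rabs_R0; lra. auto.
   + intros v i Hi. destruct (Nat.eq_dec i j) as [->|Hij].
     * apply (ex_derive_ext (fun _ => pds l (fun w => f (upd w j c)) v)).
       intro s. symmetry. apply indep_pds, indep_fix. apply ex_derive_const.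
     * apply (ex_derive_ext (fun s => pds l f (upd (upd v j c) i s))).
       { intro s. rewrite pds_fix by auto. rewrite upd_comm by auto. reflexivity. }
       rewrite <- (upd_neq v j i c) by auto. apply Hd; auto.
Qed.

Definition emb3 (v : nat -> R) : nat -> R := fun i => match i with
 | 0 => v 0%nat | 1 => v 1%nat | 2 => v 2%nat | _ => 0 end.
Lemma emb3_upd v i s : (i < 3)%nat -> emb3 (upd v i s) = upd (emb3 v) i s.
Proof. intros Hi. apply functional_extensionality; intro k.
 do 3 (destruct i as [|i]; [destruct k as [|[|[|k]]]; reflexivity|]). lia. Qed.
Lemma emb3_at v i : (i < 3)%nat -> emb3 v i = v i.
Proof. intros Hi. do 3 (destruct i as [|i]; [reflexivity|]). lia. Qed.

Lemma pds_emb3 f l : List.Forall (fun i => (i < 3)%nat) l ->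
  forall v, pds l (fun w => f (emb3 w)) v = pds l f (emb3 v).
Proof. induction l as [|a l IH]; simpl; intros Hl v; auto. inversion Hl; subst.
 unfold pd. rewrite <- (emb3_at v a) by auto. apply Derive_ext; intro s.
 rewrite IH by auto. now rewrite emb3_upd. Qed.

Lemma smooth_emb3 f : smooth_n 9 f -> smooth_n 3 (fun w => f (emb3 w)).
Proof. intros H l Hl.
 assert (Hl9 : List.Forall (fun i => (i < 9)%nat) l) by (eapply List.Forall_impl; [|exact Hl]; simpl; lia).
 destruct (H l Hl9) as [Hc Hd]. split.
 - intros v eps He. destruct (Hc (emb3 v) eps He) as [del [Hdel Hw]].
   exists del; split; auto. intros w Hwv. rewrite !pds_emb3 by auto. apply Hw.
   intros i Hi. destruct (lt_dec i 3). rewrite !emb3_at by auto. auto.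
   do 3 (destruct i as [|i]; [lia|]). simpl. rewrite Rminus_diag, Rabs_R0; lra.
 - intros v i Hi. apply (ex_derive_ext (fun s => pds l f (upd (emb3 v) i s))).
   { intro s. rewrite pds_emb3 by auto. now rewrite emb3_upd. }
   rewrite <- (emb3_at v i) by auto. apply Hd; lia.
Qed.

Lemma is_derive_eq (f : R -> R) x l l' : is_derive f x l -> l = l' -> is_derive f x l'.
Proof. intros H ->; exact H. Qed.

Lemma affine_of_indep n f i : smooth_n n f -> (i < n)%nat -> indep (pd i f) i ->
  forall v, f v = f (upd v i 0) + v i * pd i f (upd v i 0).
Proof. intros H Hi Hp v. set (c := pd i f (upd v i 0)).
 assert (K : forall a b, a < b -> f (upd v i a) - a * c = f (upd v i b) - b * c).
 { intros a b Hab. apply (eq_is_derive (fun r => f (upd v i r) - r * c)); [|exact Hab].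
   intros t _. eapply is_derive_eq.
   apply (is_derive_minus (fun r => f (upd v i r)) (fun r => r * c)).
   apply (smooth_is_derive_at n f nil v i t H (List.Forall_nil _) Hi).
   assert (Hc : is_derive (fun r : R => r * c) t c) by (auto_derive; try easy; ring). exact Hc.
   unfold c. simpl. rewrite <- (Hp (upd v i 0) t). rewrite upd_upd.
   unfold minus, plus, opp, mult, scal, zero; simpl. ring. }
 assert (E : f (upd v i (v i)) - v i * c = f (upd v i 0) - 0 * c).
 { destruct (Rtotal_order (v i) 0) as [h|[h|h]].
   - now apply K. - now rewrite h. - symmetry; now apply K. }
 rewrite upd_id in E. lra. Qed.

Definition v3 (x y z : R) : nat -> R := fun i => match i with 0 => x | 1 => y | 2 => z | _ => 0 end.

Lemma s3_dx F : smooth3 F -> smooth3 (d3x F).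
Proof. intros H. exact (smooth_pd 3 _ 0 H ltac:(lia)). Qed.
Lemma s3_dy F : smooth3 F -> smooth3 (d3y F).
Proof. intros H. exact (smooth_pd 3 _ 1 H ltac:(lia)). Qed.
Lemma s3_dz F : smooth3 F -> smooth3 (d3z F).
Proof. intros H. exact (smooth_pd 3 _ 2 H ltac:(lia)). Qed.
Lemma s3_isdx F x y z : smooth3 F -> is_derive (fun s => F s y z) x (d3x F x y z).
Proof. intros H. apply Derive_correct.
 exact (proj2 (H nil (List.Forall_nil _)) (v3 x y z) 0%nat ltac:(lia)). Qed.
Lemma s3_isdy F x y z : smooth3 F -> is_derive (fun s => F x s z) y (d3y F x y z).
Proof. intros H. apply Derive_correct.
 exact (proj2 (H nil (List.Forall_nil _)) (v3 x y z) 1%nat ltac:(lia)). Qed.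
Lemma s3_isdz F x y z : smooth3 F -> is_derive (fun s => F x y s) z (d3z F x y z).
Proof. intros H. apply Derive_correct.
 exact (proj2 (H nil (List.Forall_nil _)) (v3 x y z) 2%nat ltac:(lia)). Qed.

Lemma is_derive_lin (f g : R -> R) x a b c :
  is_derive f x a -> is_derive g x b -> is_derive (fun s => f s + c * g s) x (a + c * b).
Proof. intros Hf Hg. eapply is_derive_eq.
 apply (is_derive_plus f (fun s => c * g s)); [exact Hf|]. apply (is_derive_scal g x c b Hg).
 unfold plus, scal; simpl. unfold mult; simpl. reflexivity. Qed.

Inductive coord := CB (i:nat) | CU (k l m n : nat).
Definition coord_eqb (c d : coord) : bool := match c, d with
 | CB i, CB j => Nat.eqb i j
 | CU a b c' d', CU a' b' c'' d'' =>
     andb (andb (Nat.eqb a a') (Nat.eqb b b')) (andb (Nat.eqb c' c'') (Nat.eqb d' d''))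
 | _, _ => false end.

Lemma coord_eqb_spec c d : reflect (c = d) (coord_eqb c d).
Proof. destruct c, d; simpl; try (constructor; congruence).
 - destruct (Nat.eqb_spec i i0); constructor; congruence.
 - destruct (Nat.eqb_spec k k0), (Nat.eqb_spec l l0), (Nat.eqb_spec m m0), (Nat.eqb_spec n n0);
   simpl; constructor; congruence.
Qed.

Definition getc (c : coord) (J : jet) : R :=
  match c with CB i => base i J | CU k l m n => ju J k l m n end.
Definition setc c s J :=
  match c with CB i => set_base i s J | CU k l m n => set_u k l m n s J end.
Definition validc c := match c with CB i => Nat.ltb i 4 | _ => true end.

Lemma getc_setc c c' s J : validc c = true -> validc c' = true ->
  getc c' (setc c s J) = if coord_eqb c' c then s else getc c' J.
Proof. intros H H'. destruct c as [i|k l m n], c' as [j|a b c d]; simpl in *.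
 - apply Nat.ltb_lt in H; apply Nat.ltb_lt in H'.
   destruct i as [|[|[|[|i]]]]; try lia; destruct j as [|[|[|[|j]]]]; try lia; reflexivity.
 - destruct i as [|[|[|[|i]]]]; reflexivity.
 - destruct j as [|[|[|[|j]]]]; reflexivity.
 - reflexivity.
Qed.

Definition vec (J : jet) : nat -> R := fun i => match i with
 | 0 => jx J | 1 => jy J | 2 => jz J | 3 => jt J
 | 4 => ju J 0 0 0 0 | 5 => ju J 1 0 0 0 | 6 => ju J 0 1 0 0 | 7 => ju J 0 0 1 0
 | 8 => ju J 0 0 0 1 | _ => 0 end.

Definition idxU (k l m n : nat) : option nat :=
  match k, l, m, n with
  | 0, 0, 0, 0 => Some 4%nat | 1, 0, 0, 0 => Some 5%nat | 0, 1, 0, 0 => Some 6%nat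
  | 0, 0, 1, 0 => Some 7%nat | 0, 0, 0, 1 => Some 8%nat | _, _, _, _ => None end.
Definition idx (c : coord) : option nat := match c with
 | CB i => if Nat.ltb i 4 then Some i else None
 | CU k l m n => idxU k l m n end.

Lemma vec_setc c s J : validc c = true ->
  vec (setc c s J) = match idx c with Some j => upd (vec J) j s | None => vec J end.
Proof. intros H. destruct c as [i|k l m n]; simpl in *.
 - apply Nat.ltb_lt in H. destruct i as [|[|[|[|i]]]]; try lia; simpl;
   apply functional_extensionality; intros [|[|[|[|[|[|[|[|[|x]]]]]]]]]; reflexivity.
 - destruct k as [|[|k]], l as [|[|l]], m as [|[|m]], n as [|[|n]]; simpl;
   apply functional_extensionality; intros [|[|[|[|[|[|[|[|[|x]]]]]]]]]; reflexivity.
Qed.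

Lemma idx_get c j J : idx c = Some j -> getc c J = vec J j /\ (j < 9)%nat.
Proof. destruct c as [i|k l m n]; simpl.
 - destruct (Nat.ltb_spec i 4); intros E; inversion E; subst.
   destruct j as [|[|[|[|j]]]]; try lia; simpl; split; auto; lia.
 - destruct k as [|[|k]], l as [|[|l]], m as [|[|m]], n as [|[|n]]; simpl; intros E;
   inversion E; subst; simpl; split; auto; lia.
Qed.

Inductive ex := Cst (z:Z) | Par (i:nat) | Var (c:coord) | At (f:nat) (l:list nat)
  | Add (a b:ex) | Mul (a b:ex).

Definition par (c0 delta beta : R) (i : nat) : R :=
  match i with 0 => c0 | 1 => delta | _ => beta end.

Section Den.
Variables (c0 delta beta : R) (fs : nat -> (nat->R)->R).

Fixpoint den (J:jet) (a:ex) : R := match a with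
 | Cst z => IZR z | Par i => par c0 delta beta i | Var c => getc c J
 | At f l => pds l (fs f) (vec J)
 | Add a b => den J a + den J b | Mul a b => den J a * den J b end.

Definition isCst (a : ex) : option Z := match a with Cst z => Some z | _ => None end.

Definition sAdd a b := match isCst a with
 | Some x => match isCst b with Some y => Cst (x + y)
             | None => if Z.eqb x 0 then b else Add a b end
 | None => match isCst b with Some y => if Z.eqb y 0 then a else Add a b
             | None => Add a b end end.
Definition sMul a b := match isCst a with
 | Some x => match isCst b with Some y => Cst (x * y)
             | None => if Z.eqb x 0 then Cst 0 else if Z.eqb x 1 then b else Mul a b end
 | None => match isCst b with
     Some y => if Z.eqb y 0 then Cst 0 else if Z.eqb y 1 then a else Mul a b
             | None => Mul a b end end.

Lemma isCst_den a z J : isCst a = Some z -> den J a = IZR z.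
Proof. destruct a; simpl; congruence. Qed.

Lemma den_sAdd J a b : den J (sAdd a b) = den J a + den J b.
Proof. unfold sAdd. destruct (isCst a) as [x|] eqn:Ha, (isCst b) as [y|] eqn:Hb;
 try rewrite (isCst_den _ _ _ Ha); try rewrite (isCst_den _ _ _ Hb).
 - rewrite <- plus_IZR; reflexivity.
 - destruct (Z.eqb_spec x 0); subst; simpl; try rewrite (isCst_den _ _ _ Ha); try ring.
 - destruct (Z.eqb_spec y 0); subst; simpl; try rewrite (isCst_den _ _ _ Hb); try ring.
 - reflexivity.
Qed.

Lemma den_sMul J a b : den J (sMul a b) = den J a * den J b.
Proof. unfold sMul. destruct (isCst a) as [x|] eqn:Ha, (isCst b) as [y|] eqn:Hb;
 try rewrite (isCst_den _ _ _ Ha); try rewrite (isCst_den _ _ _ Hb).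
 - rewrite <- mult_IZR; reflexivity.
 - destruct (Z.eqb_spec x 0); [|destruct (Z.eqb_spec x 1)]; subst; simpl;
   try rewrite (isCst_den _ _ _ Ha); try ring.
 - destruct (Z.eqb_spec y 0); [|destruct (Z.eqb_spec y 1)]; subst; simpl;
   try rewrite (isCst_den _ _ _ Hb); try ring.
 - reflexivity.
Qed.

Fixpoint wf (a : ex) : bool := match a with
 | Var c => validc c | At f l => forallb (fun j => Nat.ltb j 9) l
 | Add a b | Mul a b => wf a && wf b | _ => true end.

Lemma wf_sAdd a b : wf a = true -> wf b = true -> wf (sAdd a b) = true.
Proof. intros A B. unfold sAdd. destruct (isCst a), (isCst b); simpl; auto;
 repeat match goal with |- context [if ?c then _ else _] => destruct c end; simpl; rewrite ?A, ?B; auto. Qed.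
Lemma wf_sMul a b : wf a = true -> wf b = true -> wf (sMul a b) = true.
Proof. intros A B. unfold sMul. destruct (isCst a), (isCst b); simpl; auto;
 repeat match goal with |- context [if ?c then _ else _] => destruct c end; simpl; rewrite ?A, ?B; auto. Qed.

Fixpoint dc (c : coord) (a : ex) : ex := match a with
 | Cst _ | Par _ => Cst 0
 | Var c' => if coord_eqb c c' then Cst 1 else Cst 0
 | At f l => match idx c with Some j => At f (j :: l) | None => Cst 0 end
 | Add a b => sAdd (dc c a) (dc c b)
 | Mul a b => sAdd (sMul (dc c a) b) (sMul a (dc c b)) end.

Lemma wf_dc c a : validc c = true -> wf a = true -> wf (dc c a) = true.
Proof. intros Hc. induction a; simpl; intros H; auto.
 - match goal with |- context[coord_eqb ?a ?b] => destruct (coord_eqb a b) end; auto.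
 - destruct (idx c) eqn:E; simpl; auto. destruct (idx_get _ _ (Jet 0 0 0 0 (fun _ _ _ _ => 0)) E) as [_ Hn].
   apply Nat.ltb_lt in Hn. now rewrite Hn.
 - apply andb_prop in H as [H1 H2]. apply wf_sAdd; auto.
 - apply andb_prop in H as [H1 H2]. apply wf_sAdd; apply wf_sMul; auto.
Qed.

Hypothesis Hfs : forall f, smooth_n 9 (fs f).

Lemma forallb_lt9 l : forallb (fun j => Nat.ltb j 9) l = true -> List.Forall (fun i => (i < 9)%nat) l.
Proof. induction l; simpl; auto. intros H; apply andb_prop in H as [H1 H2].
 constructor; auto. now apply Nat.ltb_lt. Qed.

Lemma setc_getc c J : validc c = true -> setc c (getc c J) J = J.
Proof. destruct J as [x y z t u]. destruct c as [i|k l m n]; simpl; intros H.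
 - apply Nat.ltb_lt in H. destruct i as [|[|[|[|i]]]]; try lia; reflexivity.
 - unfold set_u; simpl. f_equal. apply functional_extensionality; intro a;
   apply functional_extensionality; intro b; apply functional_extensionality; intro c;
   apply functional_extensionality; intro d.
   destruct (Nat.eqb_spec a k), (Nat.eqb_spec b l), (Nat.eqb_spec c m), (Nat.eqb_spec d n);
   simpl; subst; reflexivity.
Qed.


Lemma dc_correct c a J : validc c = true -> wf a = true ->
  is_derive (fun s => den (setc c s J) a) (getc c J) (den J (dc c a)).
Proof. intros Hc. induction a; simpl; intros H.
 - (eapply is_derive_eq; [apply is_derive_const|reflexivity]).
 - (eapply is_derive_eq; [apply is_derive_const|reflexivity]).
 - eapply is_derive_ext. { intro s. symmetry. apply getc_setc; auto. }
   destruct (coord_eqb_spec c c1), (coord_eqb_spec c1 c); subst; try congruence.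
   + (eapply is_derive_eq; [apply is_derive_id|reflexivity]).
   + (eapply is_derive_eq; [apply is_derive_const|reflexivity]).
 - eapply is_derive_ext. { intro s. rewrite vec_setc by auto. reflexivity. }
   destruct (idx c) eqn:E.
   + destruct (idx_get _ _ J E) as [-> Hn]. simpl.
     apply (smooth_is_derive 9); auto. now apply forallb_lt9.
   + (eapply is_derive_eq; [apply is_derive_const|reflexivity]).
 - apply andb_prop in H as [H1 H2]. rewrite den_sAdd.
   apply (is_derive_plus (fun s => den (setc c s J) a1) (fun s => den (setc c s J) a2)); auto.
 - apply andb_prop in H as [H1 H2]. rewrite den_sAdd, !den_sMul.
   eapply is_derive_eq.
   apply (is_derive_mult (fun s => den (setc c s J) a1) (fun s => den (setc c s J) a2)); auto.
   intros; apply Rmult_comm.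
   simpl. rewrite setc_getc by auto. unfold plus, mult; simpl. ring.
Qed.

Definition sumL (l : list R) := fold_right Rplus 0 l.
Lemma sumL_app l1 l2 : sumL (l1 ++ l2) = sumL l1 + sumL l2.
Proof. induction l1; simpl; [ring|]. unfold sumL in *; simpl. rewrite IHl1. ring. Qed.
Lemma sum_f_R0_seq f N : sum_f_R0 f N = sumL (map f (seq 0 (S N))).
Proof. induction N. { simpl. unfold sumL; simpl; ring. }
 rewrite seq_S, map_app, sumL_app. simpl sum_f_R0. rewrite IHN. unfold sumL; simpl. ring. Qed.
Lemma sumL_flat_map {A B} (h : B -> R) (F : A -> list B) L :
  sumL (map h (flat_map F L)) = sumL (map (fun x => sumL (map h (F x))) L).
Proof. induction L; simpl; auto. rewrite map_app, sumL_app, IHL. reflexivity. Qed.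
Lemma sumL_zero {A} (L : list A) : sumL (map (fun _ => 0) L) = 0.
Proof. induction L; simpl; auto. unfold sumL in *; simpl. rewrite IHL; ring. Qed.

Definition boxlist N := flat_map (fun k => flat_map (fun l => flat_map (fun m =>
   map (fun n => CU k l m n) (seq 0 (S N))) (seq 0 (S N))) (seq 0 (S N))) (seq 0 (S N)).
Definition gU (g : nat -> nat -> nat -> nat -> R) c :=
  match c with CU k l m n => g k l m n | CB _ => 0 end.
Lemma sum_box_list N g : sum_box N g = sumL (map (gU g) (boxlist N)).
Proof. unfold sum_box, boxlist. rewrite sum_f_R0_seq, sumL_flat_map. f_equal.
 apply map_ext; intro k. rewrite sum_f_R0_seq, sumL_flat_map. f_equal; apply map_ext; intro l.
 rewrite sum_f_R0_seq, sumL_flat_map. f_equal; apply map_ext; intro m.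
 rewrite sum_f_R0_seq, map_map. reflexivity. Qed.

Lemma sumL_filter {A} (h : A -> R) P L : (forall x, In x L -> P x = false -> h x = 0) ->
  sumL (map h L) = sumL (map h (filter P L)).
Proof. induction L; simpl; intros H; auto. destruct (P a) eqn:E; simpl.
 - unfold sumL in *; simpl. f_equal. apply IHL; auto.
 - rewrite H by auto. unfold sumL in *; simpl. rewrite IHL by auto. ring. Qed.

Definition memc c l := existsb (coord_eqb c) l.
Definition base9 := CB 0 :: CB 1 :: CB 2 :: CB 3 :: CU 0 0 0 0 :: CU 1 0 0 0 :: CU 0 1 0 0
   :: CU 0 0 1 0 :: CU 0 0 0 1 :: nil.
Fixpoint vars a := match a with Var c => c :: nil | At _ _ => base9
  | Add a b | Mul a b => vars a ++ vars b | _ => nil end.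

Lemma idx_mem c j : idx c = Some j -> memc c base9 = true.
Proof. destruct c as [i|k l m n]; simpl.
 - destruct i as [|[|[|[|i]]]]; simpl; auto; discriminate.
 - destruct k as [|[|k]], l as [|[|l]], m as [|[|m]], n as [|[|n]]; simpl; auto; discriminate.
Qed.

Lemma dc_notvar c a J : memc c (vars a) = false -> den J (dc c a) = 0.
Proof. induction a; simpl; intros H; try reflexivity.
 - unfold memc in H; simpl in H. rewrite orb_false_r in H. rewrite H. reflexivity.
 - destruct (idx c) eqn:E; [|reflexivity]. apply idx_mem in E. unfold memc, base9 in *. simpl in *. congruence.
 - unfold memc in H; rewrite existsb_app in H; apply orb_false_iff in H as [H1 H2].
   rewrite den_sAdd, IHa1, IHa2; auto; ring.
 - unfold memc in H; rewrite existsb_app in H; apply orb_false_iff in H as [H1 H2].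
   rewrite den_sAdd, !den_sMul, IHa1, IHa2; auto; ring.
Qed.

Definition shift i c := match c with
  | CU k l m n => CU (k + e i 0) (l + e i 1) (m + e i 2) (n + e i 3) | CB _ => CB 0 end.
Definition sumS (l : list ex) := fold_right sAdd (Cst 0) l.
Lemma den_sumS J l : den J (sumS l) = sumL (map (den J) l).
Proof. induction l; simpl; auto. rewrite den_sAdd, IHl. reflexivity. Qed.
Lemma wf_sumS l : forallb wf l = true -> wf (sumS l) = true.
Proof. induction l; simpl; auto. intros H; apply andb_prop in H as [H1 H2]. apply wf_sAdd; auto. Qed.

Definition Dsym i a := sAdd (dc (CB i) a) (sumS (map (fun c => match c with
   | CU _ _ _ _ => sMul (Var (shift i c)) (dc c a) | CB _ => Cst 0 end)
   (filter (fun c => memc c (vars a)) (boxlist jet_trunc)))).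

Lemma wf_Dsym i a : (i < 4)%nat -> wf a = true -> wf (Dsym i a) = true.
Proof. intros Hi H. unfold Dsym. apply wf_sAdd.
 - apply wf_dc; auto. simpl. now apply Nat.ltb_lt.
 - apply wf_sumS. generalize (filter (fun c => memc c (vars a)) (boxlist jet_trunc)).
   induction l; simpl; auto. rewrite IHl, andb_true_r. destruct a0; simpl; auto.
   apply wf_sMul; simpl; auto. apply wf_dc; auto.
Qed.

Lemma D_correct i a J : (i < 4)%nat -> wf a = true ->
  Defs.D i (fun J => den J a) J = den J (Dsym i a).
Proof. intros Hi H. unfold Defs.D, Dsym. rewrite den_sAdd, den_sumS, map_map. f_equal.
 - unfold dbase. apply is_derive_unique.
   apply (dc_correct (CB i) a J); auto. simpl; now apply Nat.ltb_lt.
 - rewrite sum_box_list. rewrite (sumL_filter _ (fun c => memc c (vars a))).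
   + f_equal. apply map_ext; intro c. destruct c as [j|k l m n]; simpl; [reflexivity|].
     rewrite den_sMul. simpl. f_equal. unfold du. apply is_derive_unique.
     apply (dc_correct (CU k l m n) a J); auto.
   + intros [j|k l m n] _ Hm; simpl; [reflexivity|].
     unfold du. pose proof (dc_correct (CU k l m n) a J eq_refl H) as K; unfold setc, getc in K.
     rewrite (is_derive_unique (fun s : R => _) _ _ K).
     rewrite dc_notvar by auto. ring.
Qed.

Fixpoint iterDs i n a := match n with 0 => a | S n' => Dsym i (iterDs i n' a) end.
Lemma wf_iterDs i n a : (i < 4)%nat -> wf a = true -> wf (iterDs i n a) = true.
Proof. induction n; simpl; auto. intros; apply wf_Dsym; auto. Qed.

Lemma iterD_correct i n a : (i < 4)%nat -> wf a = true ->
  iterD i n (fun J => den J a) = fun J => den J (iterDs i n a).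
Proof. intros Hi H. induction n; simpl; auto. rewrite IHn.
 apply functional_extensionality; intro J. apply D_correct; auto. now apply wf_iterDs. Qed.

Lemma D_zero i : Defs.D i (fun _ => 0) = fun _ => 0.
Proof. apply functional_extensionality; intro J. unfold Defs.D, dbase, du.
 rewrite Derive_const, sum_box_list.
 rewrite (map_ext _ (fun _ => 0)). { rewrite sumL_zero; ring. }
 intros [j|k l m n]; simpl; auto. rewrite Derive_const; ring. Qed.
Lemma iterD_zero i n : iterD i n (fun _ => 0) = fun _ => 0.
Proof. induction n; simpl; auto. rewrite IHn. apply D_zero. Qed.

Definition sgnZ n := if Nat.even n then 1%Z else (-1)%Z.
Lemma sgnZ_pow n : (-1)^n = IZR (sgnZ n).
Proof. assert (forall n, (-1)^n = IZR (sgnZ n) /\ (-1)^(S n) = IZR (sgnZ (S n))).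
 { induction n0; [split; simpl; unfold sgnZ; simpl; ring|].
   destruct IHn0 as [A B]; split; auto. simpl pow. simpl in B. rewrite <- Rmult_assoc.
   replace (-1 * -1) with 1 by ring. rewrite Rmult_1_l. rewrite A.
   unfold sgnZ. rewrite Nat.even_succ_succ. reflexivity. }
 apply H. Qed.

Definition eterm a c := match c with
  | CU k l m n => sMul (Cst (sgnZ (k + l + m + n)))
       (iterDs 0 k (iterDs 1 l (iterDs 2 m (iterDs 3 n (dc c a)))))
  | CB _ => Cst 0 end.
Definition Esym a := sumS (map (eterm a) (filter (fun c => memc c (vars a)) (boxlist jet_trunc))).

Lemma euler_correct a J : wf a = true -> euler (fun J => den J a) J = den J (Esym a).
Proof. intros H. unfold euler, Esym. rewrite sum_box_list, den_sumS, map_map.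
 rewrite (sumL_filter _ (fun c => memc c (vars a))).
 - f_equal. apply map_ext; intros [j|k l m n]; simpl; [reflexivity|].
   assert (E : du k l m n (fun J => den J a) = fun J => den J (dc (CU k l m n) a)).
   { apply functional_extensionality; intro J'. unfold du. apply is_derive_unique.
     apply (dc_correct (CU k l m n) a J'); auto. }
   rewrite E. assert (W : wf (dc (CU k l m n) a) = true) by (apply wf_dc; auto).
   rewrite iterD_correct by (auto; lia).
   rewrite iterD_correct by (auto; try lia; apply wf_iterDs; auto; lia).
   rewrite iterD_correct by (auto; try lia; repeat apply wf_iterDs; auto; lia).
   rewrite iterD_correct by (auto; try lia; repeat apply wf_iterDs; auto; lia).
   rewrite den_sMul. simpl den at 1. now rewrite sgnZ_pow.
 - intros [j|k l m n] _ Hm; simpl; [reflexivity|].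
   assert (E : du k l m n (fun J => den J a) = fun _ => 0).
   { apply functional_extensionality; intro J'. unfold du.
     pose proof (dc_correct (CU k l m n) a J' eq_refl H) as K; unfold setc, getc in K.
     rewrite (is_derive_unique (fun s : R => _) _ _ K).
     apply dc_notvar; auto. }
   rewrite E, !iterD_zero. ring.
Qed.

Definition memK (f j : nat) (K : list (nat * nat)) :=
  existsb (fun p => Nat.eqb (fst p) f && Nat.eqb (snd p) j) K.
Fixpoint simp (K : list (nat*nat)) (sg : coord -> option Z) a := match a with
 | Var c => match sg c with Some z => Cst z | None => Var c end
 | At f l => if existsb (fun j => memK f j K) l then Cst 0 else At f l
 | Add a b => sAdd (simp K sg a) (simp K sg b)
 | Mul a b => sMul (simp K sg a) (simp K sg b)
 | x => x end.

Lemma den_simp K sg a J :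
  (forall f j, memK f j K = true -> indep (fs f) j) ->
  (forall c z, sg c = Some z -> getc c J = IZR z) ->
  den J (simp K sg a) = den J a.
Proof. intros HK Hs. induction a; simpl; auto.
 - destruct (sg c) eqn:E; simpl; auto. symmetry; auto.
 - destruct (existsb (fun j => memK f j K) l) eqn:E; simpl; auto.
   apply existsb_exists in E as [j [Hj Hm]]. symmetry. eapply pds_zero_in; eauto.
 - rewrite den_sAdd; congruence.
 - rewrite den_sMul; congruence.
Qed.

Lemma pipeline a J K sg : wf a = true ->
  (forall f j, memK f j K = true -> indep (fs f) j) ->
  (forall c z, sg c = Some z -> getc c J = IZR z) ->
  euler (fun J => den J a) J = den J (simp K sg (Esym a)).
Proof. intros. rewrite den_simp by auto. now apply euler_correct. Qed.
End Den.

Definition u k l m n := Var (CU k l m n).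
Definition Esyn : ex :=
  Add (Add (Add (Mul (Par 1) (u 0 0 0 3))
   (Mul (Par 2) (Add (Mul (Cst 2) (Mul (u 0 0 0 1) (u 0 0 0 1)))
                     (Mul (Cst 2) (Mul (u 0 0 0 0) (u 0 0 0 2))))))
   (Mul (Cst (-2)) (Mul (Mul (Par 0) (Mul (Par 0) (Par 0))) (u 0 0 1 1))))
   (Mul (Mul (Mul (Par 0) (Par 0)) (Mul (Par 0) (Par 0))) (Add (u 2 0 0 0) (u 0 2 0 0))).
Definition LE := Mul (At 0 nil) Esyn.

Fixpoint size (a : ex) : nat := match a with Add a b | Mul a b => S (size a + size b) | _ => 1 end.
Definition sg1 (sp : coord) (c : coord) : option Z := match c with
  | CB _ => None
  | CU k l m n => match idxU k l m n with Some _ => None | None =>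
      if coord_eqb c sp then None else Some 0%Z end end.

Definition Lv (Lam : R -> R -> R -> R -> R -> R -> R -> R -> R -> R) : (nat -> R) -> R :=
  fun v => Lam (v 0%nat) (v 1%nat) (v 2%nat) (v 3%nat) (v 4%nat) (v 5%nat) (v 6%nat) (v 7%nat) (v 8%nat).
Definition mkJ (v : nat -> R) (g : nat -> nat -> nat -> nat -> R) : jet :=
  Jet (v 0%nat) (v 1%nat) (v 2%nat) (v 3%nat)
    (fun a b c d => match idxU a b c d with Some j => v j | None => g a b c d end).
Lemma vec_mkJ v g : vec (mkJ v g) = trunc v.
Proof. apply functional_extensionality; intros [|[|[|[|[|[|[|[|[|x]]]]]]]]]; reflexivity. Qed.

Definition gsp (sp : coord) (w : R) : nat -> nat -> nat -> nat -> R :=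
  fun a b c d => if coord_eqb (CU a b c d) sp then w else 0.

Lemma sg1_ok sp w v c z : sg1 sp c = Some z -> getc c (mkJ v (gsp sp w)) = IZR z.
Proof. destruct c as [i|a b c d]; intros H. { discriminate H. }
 change (getc (CU a b c d) (mkJ v (gsp sp w))) with
   (match idxU a b c d with Some j => v j | None => gsp sp w a b c d end).
 unfold sg1 in H. destruct (idxU a b c d). { discriminate H. }
 unfold gsp in *. destruct (coord_eqb (CU a b c d) sp). { discriminate H. }
 inversion H. reflexivity. Qed.

Lemma LE_den c0 delta beta Lam J :
  lam_jet Lam J * KZK_E c0 delta beta J = den c0 delta beta (fun _ => Lv Lam) J LE.
Proof. unfold LE, Esyn, KZK_E, lam_jet. simpl. unfold Lv, vec. change (IZR (-2)) with (-(2)). ring. Qed.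

Definition r1 := Eval vm_compute in simp nil (sg1 (CU 0 0 0 4)) (Esym LE).
Lemma r1_eq : simp nil (sg1 (CU 0 0 0 4)) (Esym LE) = r1.
Proof. vm_compute. reflexivity. Qed.

Arguments pds : simpl never.
Arguments vec : simpl never.



Lemma eval_at c0 delta beta fs (Hfs : forall f, smooth_n 9 (fs f)) a (Hwf : wf a = true) K
  (HK : forall f j, memK f j K = true -> indep (fs f) j) sg r
  (Hr : simp K sg (Esym a) = r) v g
  (Hsg : forall c z, sg c = Some z -> getc c (mkJ v g) = IZR z)
  (HE : euler (fun J => den c0 delta beta fs J a) (mkJ v g) = 0) :
  den c0 delta beta fs (mkJ v g) r = 0.
Proof. rewrite <- Hr, <- HE. symmetry. now apply pipeline. Qed.

Lemma Lv_trunc Lam v : Lv Lam v = Lv Lam (trunc v).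
Proof. reflexivity. Qed.

Lemma pdLv_trunc Lam l v : List.Forall (fun i => (i < 9)%nat) l ->
  pds l (Lv Lam) v = pds l (Lv Lam) (trunc v).
Proof. intros; apply pds_trunc; auto. Qed.

Definition r1_8 := Eval vm_compute in simp nil (sg1 (CU 0 0 0 4)) (Esym LE).
Lemma r1_8_eq : simp nil (sg1 (CU 0 0 0 4)) (Esym LE) = r1_8. Proof. vm_compute; reflexivity. Qed.
Definition r1_5 := Eval vm_compute in simp nil (sg1 (CU 1 0 0 3)) (Esym LE).
Lemma r1_5_eq : simp nil (sg1 (CU 1 0 0 3)) (Esym LE) = r1_5. Proof. vm_compute; reflexivity. Qed.
Definition r1_6 := Eval vm_compute in simp nil (sg1 (CU 0 1 0 3)) (Esym LE).
Lemma r1_6_eq : simp nil (sg1 (CU 0 1 0 3)) (Esym LE) = r1_6. Proof. vm_compute; reflexivity. Qed.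
Definition r1_7 := Eval vm_compute in simp nil (sg1 (CU 0 0 1 3)) (Esym LE).
Lemma r1_7_eq : simp nil (sg1 (CU 0 0 1 3)) (Esym LE) = r1_7. Proof. vm_compute; reflexivity. Qed.

Lemma memK_In f j K : memK f j K = true -> In (f, j) K.
Proof. unfold memK. intros H. apply existsb_exists in H as [[a b] [Hin H]].
 simpl in H. apply andb_prop in H as [H1 H2]. apply Nat.eqb_eq in H1, H2. subst. auto. Qed.

Definition K2 := ((0,5)::(0,6)::(0,7)::(0,8)::nil)%nat.
Definition r2 := Eval vm_compute in simp K2 (sg1 (CU 0 0 0 2)) (Esym LE).
Lemma r2_eq : simp K2 (sg1 (CU 0 0 0 2)) (Esym LE) = r2. Proof. vm_compute; reflexivity. Qed.

Definition LE3 := Mul (Add (At 0 nil) (Mul (u 0 0 0 0) (At 1 nil))) Esyn.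
Definition K3 := ((0,4)::(0,5)::(0,6)::(0,7)::(0,8)::(1,4)::(1,5)::(1,6)::(1,7)::(1,8)::nil)%nat.
Definition r3 := Eval vm_compute in simp K3 (sg1 (CB 0)) (Esym LE3).
Lemma r3_eq : simp K3 (sg1 (CB 0)) (Esym LE3) = r3. Proof. vm_compute; reflexivity. Qed.
Definition K4 := ((0,4)::(0,5)::(0,6)::(0,7)::(0,8)::nil)%nat.
Definition r4 := Eval vm_compute in simp K4 (sg1 (CB 0)) (Esym LE).
Lemma r4_eq : simp K4 (sg1 (CB 0)) (Esym LE) = r4. Proof. vm_compute; reflexivity. Qed.

Ltac fa9 := repeat (apply List.Forall_cons; [lia|]); apply List.Forall_nil.

Section Fwd.
Variables (c0 delta beta : R) (Lam : R -> R -> R -> R -> R -> R -> R -> R -> R -> R).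
Hypothesis (Hc0 : 0 < c0) (Hd : 0 < delta) (Hb : 0 < beta).
Hypothesis HL : smooth_n 9 (Lv Lam).
Hypothesis HM : is_multiplier c0 delta beta Lam.

Lemma HE0 : forall J, euler (fun J => den c0 delta beta (fun _ => Lv Lam) J LE) J = 0.
Proof. intro J. rewrite <- (HM J). f_equal. apply functional_extensionality; intro.
 now rewrite LE_den. Qed.

Ltac st1 r req sp :=
  let v := fresh "v" in intros v;
  pose proof (eval_at c0 delta beta _ (fun _ => HL) LE eq_refl nil
     (fun f j H => ltac:(discriminate H)) _ r req v (gsp sp 0) (sg1_ok sp 0 v) (HE0 _)) as H0;
  pose proof (eval_at c0 delta beta _ (fun _ => HL) LE eq_refl nil
     (fun f j H => ltac:(discriminate H)) _ r req v (gsp sp 1) (sg1_ok sp 1 v) (HE0 _)) as H1;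
  unfold r in H0, H1; simpl in H0, H1; rewrite vec_mkJ in H0, H1; unfold gsp in H0, H1;
  simpl coord_eqb in H0, H1; cbv iota in H0, H1;
  let H := fresh "H" in
  pose proof (f_equal2 Rminus H1 H0) as H; ring_simplify in H; clear H0 H1.

Lemma st1_8 : forall v, pds (8%nat::nil) (Lv Lam) (trunc v) = 0.
Proof. st1 r1_8 r1_8_eq (CU 0 0 0 4). nra. Qed.
Lemma st1_5 : forall v, pds (5%nat::nil) (Lv Lam) (trunc v) = 0.
Proof. st1 r1_5 r1_5_eq (CU 1 0 0 3). nra. Qed.
Lemma st1_6 : forall v, pds (6%nat::nil) (Lv Lam) (trunc v) = 0.
Proof. st1 r1_6 r1_6_eq (CU 0 1 0 3). nra. Qed.
Lemma st1_7 : forall v, pds (7%nat::nil) (Lv Lam) (trunc v) = 0.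
Proof. st1 r1_7 r1_7_eq (CU 0 0 1 3). nra. Qed.

Lemma pd_Lv_zero j : (j < 9)%nat -> (forall v, pds (j::nil) (Lv Lam) (trunc v) = 0) -> indep (Lv Lam) j.
Proof. intros Hj H. apply (indep_of_pd_zero 9); auto. intro v.
 change (pd j (Lv Lam) v) with (pds (j::nil) (Lv Lam) v). rewrite pdLv_trunc; auto. Qed.

Lemma I5 : indep (Lv Lam) 5. Proof. apply pd_Lv_zero. lia. apply st1_5. Qed.
Lemma I6 : indep (Lv Lam) 6. Proof. apply pd_Lv_zero. lia. apply st1_6. Qed.
Lemma I7 : indep (Lv Lam) 7. Proof. apply pd_Lv_zero. lia. apply st1_7. Qed.
Lemma I8 : indep (Lv Lam) 8. Proof. apply pd_Lv_zero. lia. apply st1_8. Qed.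

Lemma HK2 : forall f j, memK f j K2 = true -> indep ((fun _ => Lv Lam) f) j.
Proof. intros f j H. apply memK_In in H. unfold K2 in H; simpl in H.
 repeat destruct H as [H|H]; try injection H as <- <-; auto using I5, I6, I7, I8; contradiction.
Qed.

Lemma I8' : forall l v s, pds l (Lv Lam) (upd v 8 s) = pds l (Lv Lam) v.
Proof. intros l; apply indep_pds, I8. Qed.

Ltac ev2 v a w H :=
  pose proof (eval_at c0 delta beta _ (fun _ => HL) LE eq_refl K2 HK2 _ r2 r2_eq (upd v 8 a)
     (gsp (CU 0 0 0 2) w) (sg1_ok _ w _) (HE0 _)) as H;
  unfold r2 in H; simpl in H; rewrite vec_mkJ, trunc_upd in H by lia; rewrite !I8' in H;
  unfold gsp, upd in H; simpl in H.

Lemma st2 : forall v, pds (4%nat::4%nat::nil) (Lv Lam) (trunc v) = 0.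
Proof. intro v. ev2 v 0 0 H00. ev2 v 0 1 H01. ev2 v 1 0 H10. ev2 v 1 1 H11.
 pose proof (f_equal2 Rminus (f_equal2 Rminus H11 H10) (f_equal2 Rminus H01 H00)) as H.
 ring_simplify in H. clear H00 H01 H10 H11. nra.
Qed.

Lemma I44 : indep (pd 4 (Lv Lam)) 4.
Proof. apply (indep_of_pd_zero 9). apply smooth_pd; auto; lia. lia. intro v.
 change (pd 4 (pd 4 (Lv Lam)) v) with (pds (4%nat::4%nat::nil) (Lv Lam) v).
 rewrite pdLv_trunc by fa9. apply st2. Qed.

Definition Af v := Lv Lam (upd v 4 0).
Definition Bf v := pd 4 (Lv Lam) (upd v 4 0).
Lemma Ldec v : Lv Lam v = Af v + v 4%nat * Bf v.
Proof. apply (affine_of_indep 9); [exact HL|lia|apply I44]. Qed.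
Lemma sA : smooth_n 9 Af. Proof. apply smooth_fix; auto; lia. Qed.
Lemma sB : smooth_n 9 Bf. Proof. apply smooth_fix; [apply smooth_pd; auto; lia|lia]. Qed.
Definition fs3 (k : nat) := match k with 0 => Af | _ => Bf end.
Lemma sfs3 : forall k, smooth_n 9 (fs3 k). Proof. intros [|k]; [apply sA|apply sB]. Qed.

Lemma indepA j : (4 < j < 9)%nat -> indep Af j.
Proof. intros Hj v s. unfold Af. rewrite upd_comm by lia.
 assert (j = 5%nat \/ j = 6%nat \/ j = 7%nat \/ j = 8%nat) as [-> | [-> | [-> | ->]]] by lia;
 [apply I5|apply I6|apply I7|apply I8]. Qed.
Lemma indepB j : (4 < j < 9)%nat -> indep Bf j.
Proof. intros Hj v s. unfold Bf. rewrite upd_comm by lia. apply indep_pd.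
 assert (j = 5%nat \/ j = 6%nat \/ j = 7%nat \/ j = 8%nat) as [-> | [-> | [-> | ->]]] by lia;
 [apply I5|apply I6|apply I7|apply I8]. Qed.

Lemma HK3 : forall f j, memK f j K3 = true -> indep (fs3 f) j.
Proof. intros f j H. apply memK_In in H. unfold K3 in H; simpl in H.
 repeat destruct H as [H|H]; try injection H as <- <-; simpl;
 try (apply indepA; lia); try (apply indepB; lia); try contradiction.
 apply indep_fix. intros v s; unfold Bf; now rewrite upd_upd. Qed.

Lemma HE3 : forall J, euler (fun J => den c0 delta beta fs3 J LE3) J = 0.
Proof. intro J. rewrite <- (HM J). f_equal. apply functional_extensionality; intro J'.
 rewrite LE_den. unfold LE3, LE, Esyn, u. cbn [den getc fs3].
 change (pds nil (Lv Lam) (vec J')) with (Lv Lam (vec J')). rewrite Ldec. reflexivity. Qed.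

Lemma IA8' : forall l v s, pds l Af (upd v 8 s) = pds l Af v.
Proof. intros l; apply indep_pds, indepA; lia. Qed.
Lemma IB8' : forall l v s, pds l Bf (upd v 8 s) = pds l Bf v.
Proof. intros l; apply indep_pds, indepB; lia. Qed.

Ltac ev3 v a H :=
  pose proof (eval_at c0 delta beta _ sfs3 LE3 eq_refl K3 HK3 _ r3 r3_eq (upd v 8 a)
     (gsp (CB 0) 0) (sg1_ok _ 0 _) (HE3 _)) as H;
  unfold r3 in H; simpl in H; rewrite vec_mkJ, trunc_upd in H by lia; rewrite ?IA8', ?IB8' in H;
  unfold gsp, upd in H; simpl in H.

Lemma st3 : forall v, Bf (trunc v) = 0.
Proof. intro v. ev3 v 0 H0. ev3 v 1 H1. ev3 v (-1) H2.
 pose proof (f_equal2 Rplus (f_equal2 Rminus H1 H0) (f_equal2 Rminus H2 H0)) as H.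
 ring_simplify in H. clear H0 H1 H2.
 change (pds nil Bf (trunc v)) with (Bf (trunc v)) in H. nra.
Qed.

Lemma Bzero : forall v, Bf v = 0.
Proof. intro v. rewrite <- (st3 v). unfold Bf.
 change (pd 4 (Lv Lam) (upd v 4 0)) with (pds (4%nat::nil) (Lv Lam) (upd v 4 0)).
 rewrite pdLv_trunc by fa9. rewrite trunc_upd by lia. reflexivity. Qed.

Lemma I4 : indep (Lv Lam) 4.
Proof. intros v s. rewrite (Ldec (upd v 4 s)), (Ldec v), !Bzero.
 unfold Af. rewrite upd_upd. ring. Qed.

Lemma HK4 : forall f j, memK f j K4 = true -> indep ((fun _ => Lv Lam) f) j.
Proof. intros f j H. apply memK_In in H. unfold K4 in H; simpl in H.
 repeat destruct H as [H|H]; try injection H as <- <-; auto using I4, I5, I6, I7, I8; contradiction.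
Qed.

Lemma I4' : forall l v s, pds l (Lv Lam) (upd v 4 s) = pds l (Lv Lam) v.
Proof. intros l; apply indep_pds, I4. Qed.

Ltac ev4 v a H :=
  pose proof (eval_at c0 delta beta _ (fun _ => HL) LE eq_refl K4 HK4 _ r4 r4_eq (upd v 4 a)
     (gsp (CB 0) 0) (sg1_ok _ 0 _) (HE0 _)) as H;
  unfold r4 in H; simpl in H; rewrite vec_mkJ, trunc_upd in H by lia; rewrite ?I4' in H;
  unfold gsp, upd in H; simpl in H.

Lemma st4 : forall v, pds (3%nat::3%nat::nil) (Lv Lam) (trunc v) = 0.
Proof. intro v. ev4 v 0 H0. ev4 v 1 H1.
 pose proof (f_equal2 Rminus H1 H0) as H.
 ring_simplify in H. clear H0 H1. nra.
Qed.

Lemma st4b : forall v,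
    - pds (3%nat :: 3%nat :: 3%nat :: nil) (Lv Lam) (trunc v) * delta -
    2 * pds (2%nat :: 3%nat :: nil) (Lv Lam) (trunc v) * c0 ^ 3 +
    c0 ^ 4 * pds (1%nat :: 1%nat :: nil) (Lv Lam) (trunc v) +
    c0 ^ 4 * pds (0%nat :: 0%nat :: nil) (Lv Lam) (trunc v) = 0.
Proof. intro v. ev4 v 0 H0. ring_simplify in H0. exact H0. Qed.

Lemma I33 : indep (pd 3 (Lv Lam)) 3.
Proof. apply (indep_of_pd_zero 9). apply smooth_pd; auto; lia. lia. intro v.
 change (pd 3 (pd 3 (Lv Lam)) v) with (pds (3%nat::3%nat::nil) (Lv Lam) v).
 rewrite pdLv_trunc by fa9. apply st4. Qed.

Lemma st4c : forall v,
    2 * pds (2%nat :: 3%nat :: nil) (Lv Lam) v * c0 ^ 3 =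
    c0 ^ 4 * (pds (1%nat :: 1%nat :: nil) (Lv Lam) v + pds (0%nat :: 0%nat :: nil) (Lv Lam) v).
Proof. intro v. pose proof (st4b v) as H. rewrite <- !pdLv_trunc in H by fa9.
 assert (Z : pds (3%nat :: 3%nat :: 3%nat :: nil) (Lv Lam) v = 0).
 { change (pd 3 (pd 3 (pd 3 (Lv Lam))) v = 0). apply pd_zero. intro w.
   apply pd_indep_zero, I33. }
 rewrite Z in H. lra. Qed.

Definition phiL x y z := Lam x y z 0 0 0 0 0 0.
Definition psiL x y z := pd 3 (Lv Lam) (v3 x y z).
Lemma sphi : smooth3 phiL. Proof. exact (smooth_emb3 _ HL). Qed.
Lemma spsi : smooth3 psiL. Proof. exact (smooth_emb3 _ (smooth_pd 9 _ 3 HL ltac:(lia))). Qed.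

Lemma Lv_z48 u : Lv Lam u = Lv Lam (upd (upd (upd (upd (upd u 4 0) 5 0) 6 0) 7 0) 8 0).
Proof. rewrite I8, I7, I6, I5, I4. reflexivity. Qed.
Lemma P_z48 u : pd 3 (Lv Lam) u = pd 3 (Lv Lam) (upd (upd (upd (upd (upd u 4 0) 5 0) 6 0) 7 0) 8 0).
Proof. rewrite (indep_pd _ 3 8 I8), (indep_pd _ 3 7 I7), (indep_pd _ 3 6 I6),
  (indep_pd _ 3 5 I5), (indep_pd _ 3 4 I4). reflexivity. Qed.

Lemma Lform : forall x y z t q qx qy qz qt,
  Lam x y z t q qx qy qz qt = phiL x y z + t * psiL x y z.
Proof. intros.
 set (w := fun i => match i with 0 => x | 1 => y | 2 => z | 3 => t | 4 => q | 5 => qx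
                    | 6 => qy | 7 => qz | _ => qt end).
 change (Lam x y z t q qx qy qz qt) with (Lv Lam w).
 rewrite (affine_of_indep 9 _ 3 HL ltac:(lia) I33 w).
 assert (E1 : Lv Lam (upd w 3 0) = phiL x y z) by (rewrite Lv_z48; reflexivity).
 assert (E2 : pd 3 (Lv Lam) (upd w 3 0) = psiL x y z).
 { rewrite P_z48. unfold psiL. change (pd 3 (Lv Lam)) with (pds (3%nat::nil) (Lv Lam)).
   rewrite (pdLv_trunc _ _ (v3 x y z)) by fa9. rewrite pdLv_trunc by fa9. f_equal. }
 rewrite E1, E2. subst w. reflexivity. Qed.

Lemma Lform_v u : Lv Lam u = phiL (u 0%nat) (u 1%nat) (u 2%nat) + u 3%nat * psiL (u 0%nat) (u 1%nat) (u 2%nat).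
Proof. apply Lform. Qed.

Lemma pd_via (f : (nat->R)->R) i u (g : R -> R) l :
  (forall s, f (upd u i s) = g s) -> is_derive g (u i) l -> pd i f u = l.
Proof. intros H1 H2. unfold pd. apply is_derive_unique.
 apply (is_derive_ext g); auto. Qed.

Ltac updsimp := repeat (rewrite upd_eq || (rewrite upd_neq by lia)).

Lemma pd0_L u : pd 0 (Lv Lam) u = d3x phiL (u 0%nat) (u 1%nat) (u 2%nat) + u 3%nat * d3x psiL (u 0%nat) (u 1%nat) (u 2%nat).
Proof. apply (pd_via _ 0 u (fun s => phiL s (u 1%nat) (u 2%nat) + u 3%nat * psiL s (u 1%nat) (u 2%nat))).
 { intro s. rewrite Lform_v. updsimp. reflexivity. }
 apply is_derive_lin; [apply s3_isdx, sphi|apply s3_isdx, spsi]. Qed.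
Lemma pd00_L u : pds (0%nat::0%nat::nil) (Lv Lam) u = d3x (d3x phiL) (u 0%nat) (u 1%nat) (u 2%nat) + u 3%nat * d3x (d3x psiL) (u 0%nat) (u 1%nat) (u 2%nat).
Proof. change (pds (0%nat::0%nat::nil) (Lv Lam) u) with (pd 0 (pd 0 (Lv Lam)) u).
 apply (pd_via _ 0 u (fun s => d3x phiL s (u 1%nat) (u 2%nat) + u 3%nat * d3x psiL s (u 1%nat) (u 2%nat))).
 { intro s. rewrite pd0_L. updsimp. reflexivity. }
 apply is_derive_lin; [apply s3_isdx, s3_dx, sphi|apply s3_isdx, s3_dx, spsi]. Qed.
Lemma pd1_L u : pd 1 (Lv Lam) u = d3y phiL (u 0%nat) (u 1%nat) (u 2%nat) + u 3%nat * d3y psiL (u 0%nat) (u 1%nat) (u 2%nat).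
Proof. apply (pd_via _ 1 u (fun s => phiL (u 0%nat) s (u 2%nat) + u 3%nat * psiL (u 0%nat) s (u 2%nat))).
 { intro s. rewrite Lform_v. updsimp. reflexivity. }
 apply is_derive_lin; [apply s3_isdy, sphi|apply s3_isdy, spsi]. Qed.
Lemma pd11_L u : pds (1%nat::1%nat::nil) (Lv Lam) u = d3y (d3y phiL) (u 0%nat) (u 1%nat) (u 2%nat) + u 3%nat * d3y (d3y psiL) (u 0%nat) (u 1%nat) (u 2%nat).
Proof. change (pds (1%nat::1%nat::nil) (Lv Lam) u) with (pd 1 (pd 1 (Lv Lam)) u).
 apply (pd_via _ 1 u (fun s => d3y phiL (u 0%nat) s (u 2%nat) + u 3%nat * d3y psiL (u 0%nat) s (u 2%nat))).
 { intro s. rewrite pd1_L. updsimp. reflexivity. }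
 apply is_derive_lin; [apply s3_isdy, s3_dy, sphi|apply s3_isdy, s3_dy, spsi]. Qed.
Lemma pd3_L u : pd 3 (Lv Lam) u = psiL (u 0%nat) (u 1%nat) (u 2%nat).
Proof. apply (pd_via _ 3 u (fun s => (fun _ => phiL (u 0%nat) (u 1%nat) (u 2%nat)) s + psiL (u 0%nat) (u 1%nat) (u 2%nat) * (fun r => r) s)).
 { intro s. rewrite Lform_v. updsimp. ring. }
 eapply is_derive_eq. apply is_derive_lin; [apply is_derive_const|apply is_derive_id].
 unfold zero, one; simpl. ring. Qed.
Lemma pd23_L u : pds (2%nat::3%nat::nil) (Lv Lam) u = d3z psiL (u 0%nat) (u 1%nat) (u 2%nat).
Proof. change (pds (2%nat::3%nat::nil) (Lv Lam) u) with (pd 2 (pd 3 (Lv Lam)) u).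
 apply (pd_via _ 2 u (fun s => psiL (u 0%nat) (u 1%nat) s)).
 { intro s. rewrite pd3_L. updsimp. reflexivity. }
 apply s3_isdz, spsi. Qed.

Definition w4 (x y z t : R) : nat -> R := fun i => match i with 0 => x | 1 => y | 2 => z | 3 => t | _ => 0 end.

Lemma pde_both : forall x y z t,
  2 * d3z psiL x y z * c0 ^ 3 = c0 ^ 4 * ((d3y (d3y phiL) x y z + t * d3y (d3y psiL) x y z) +
     (d3x (d3x phiL) x y z + t * d3x (d3x psiL) x y z)).
Proof. intros. pose proof (st4c (w4 x y z t)) as H. rewrite pd23_L, pd11_L, pd00_L in H.
 exact H. Qed.

Lemma forward : exists phi psi : R -> R -> R -> R,
        smooth3 phi /\ smooth3 psi /\
        (forall x y z t q qx qy qz qt,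
           Lam x y z t q qx qy qz qt = phi x y z + t * psi x y z) /\
        (forall x y z,
           d3x (d3x phi) x y z + d3y (d3y phi) x y z = 2 / c0 * d3z psi x y z) /\
        (forall x y z, d3x (d3x psi) x y z + d3y (d3y psi) x y z = 0).
Proof. exists phiL, psiL. split; [apply sphi|]. split; [apply spsi|]. split; [apply Lform|].
 assert (c4 : c0 ^ 4 <> 0) by (apply pow_nonzero; lra).
 split; intros x y z.
 - pose proof (pde_both x y z 0) as H.
   apply (Rmult_eq_reg_l (c0^4)); [|exact c4].
   transitivity (2 * d3z psiL x y z * c0 ^ 3). { rewrite H. ring. } field. lra.
 - pose proof (pde_both x y z 0) as H0. pose proof (pde_both x y z 1) as H1.
   apply (Rmult_eq_reg_l (c0^4)); [|exact c4]. nra.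
Qed.
End Fwd.

Definition r5 := Eval vm_compute in simp K4 (fun _ => None) (Esym LE).
Lemma r5_eq : simp K4 (fun _ => None) (Esym LE) = r5. Proof. vm_compute; reflexivity. Qed.

Ltac updsimp2 := repeat (rewrite upd_eq || (rewrite upd_neq by lia)).

Section Bwd.
Variables (c0 delta beta : R) (Lam : R -> R -> R -> R -> R -> R -> R -> R -> R -> R)
  (phi psi : R -> R -> R -> R).
Hypothesis (Hc0 : 0 < c0).
Hypothesis HL : smooth_n 9 (Lv Lam).
Hypothesis (Hphi : smooth3 phi) (Hpsi : smooth3 psi).
Hypothesis HLf : forall x y z t q qx qy qz qt, Lam x y z t q qx qy qz qt = phi x y z + t * psi x y z.
Hypothesis P1 : forall x y z, d3x (d3x phi) x y z + d3y (d3y phi) x y z = 2 / c0 * d3z psi x y z.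
Hypothesis P2 : forall x y z, d3x (d3x psi) x y z + d3y (d3y psi) x y z = 0.

Lemma Bform u : Lv Lam u = phi (u 0%nat) (u 1%nat) (u 2%nat) + u 3%nat * psi (u 0%nat) (u 1%nat) (u 2%nat).
Proof. apply HLf. Qed.

Lemma Bind j : (4 <= j)%nat -> indep (Lv Lam) j.
Proof. intros Hj v s. rewrite !Bform. updsimp2. reflexivity. Qed.

Lemma HK5 : forall f j, memK f j K4 = true -> indep ((fun _ => Lv Lam) f) j.
Proof. intros f j H. apply memK_In in H. unfold K4 in H; simpl in H.
 repeat destruct H as [H|H]; try injection H as <- <-; try (apply Bind; lia); contradiction.
Qed.

Lemma B0 u : pd 0 (Lv Lam) u = d3x phi (u 0%nat) (u 1%nat) (u 2%nat) + u 3%nat * d3x psi (u 0%nat) (u 1%nat) (u 2%nat).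
Proof. apply (pd_via _ 0 u (fun s => phi s (u 1%nat) (u 2%nat) + u 3%nat * psi s (u 1%nat) (u 2%nat))).
 { intro s. rewrite Bform. updsimp2. reflexivity. }
 apply is_derive_lin; [apply s3_isdx, Hphi|apply s3_isdx, Hpsi]. Qed.
Lemma B00 u : pds (0%nat::0%nat::nil) (Lv Lam) u = d3x (d3x phi) (u 0%nat) (u 1%nat) (u 2%nat) + u 3%nat * d3x (d3x psi) (u 0%nat) (u 1%nat) (u 2%nat).
Proof. change (pds (0%nat::0%nat::nil) (Lv Lam) u) with (pd 0 (pd 0 (Lv Lam)) u).
 apply (pd_via _ 0 u (fun s => d3x phi s (u 1%nat) (u 2%nat) + u 3%nat * d3x psi s (u 1%nat) (u 2%nat))).
 { intro s. rewrite B0. updsimp2. reflexivity. }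
 apply is_derive_lin; [apply s3_isdx, s3_dx, Hphi|apply s3_isdx, s3_dx, Hpsi]. Qed.
Lemma B1 u : pd 1 (Lv Lam) u = d3y phi (u 0%nat) (u 1%nat) (u 2%nat) + u 3%nat * d3y psi (u 0%nat) (u 1%nat) (u 2%nat).
Proof. apply (pd_via _ 1 u (fun s => phi (u 0%nat) s (u 2%nat) + u 3%nat * psi (u 0%nat) s (u 2%nat))).
 { intro s. rewrite Bform. updsimp2. reflexivity. }
 apply is_derive_lin; [apply s3_isdy, Hphi|apply s3_isdy, Hpsi]. Qed.
Lemma B11 u : pds (1%nat::1%nat::nil) (Lv Lam) u = d3y (d3y phi) (u 0%nat) (u 1%nat) (u 2%nat) + u 3%nat * d3y (d3y psi) (u 0%nat) (u 1%nat) (u 2%nat).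
Proof. change (pds (1%nat::1%nat::nil) (Lv Lam) u) with (pd 1 (pd 1 (Lv Lam)) u).
 apply (pd_via _ 1 u (fun s => d3y phi (u 0%nat) s (u 2%nat) + u 3%nat * d3y psi (u 0%nat) s (u 2%nat))).
 { intro s. rewrite B1. updsimp2. reflexivity. }
 apply is_derive_lin; [apply s3_isdy, s3_dy, Hphi|apply s3_isdy, s3_dy, Hpsi]. Qed.
Lemma B3 u : pd 3 (Lv Lam) u = psi (u 0%nat) (u 1%nat) (u 2%nat).
Proof. apply (pd_via _ 3 u (fun s => (fun _ => phi (u 0%nat) (u 1%nat) (u 2%nat)) s + psi (u 0%nat) (u 1%nat) (u 2%nat) * (fun r => r) s)).
 { intro s. rewrite Bform. updsimp2. ring. }
 eapply is_derive_eq. apply is_derive_lin; [apply is_derive_const|apply is_derive_id].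
 unfold zero, one; simpl. ring. Qed.
Lemma B23 u : pds (2%nat::3%nat::nil) (Lv Lam) u = d3z psi (u 0%nat) (u 1%nat) (u 2%nat).
Proof. change (pds (2%nat::3%nat::nil) (Lv Lam) u) with (pd 2 (pd 3 (Lv Lam)) u).
 apply (pd_via _ 2 u (fun s => psi (u 0%nat) (u 1%nat) s)).
 { intro s. rewrite B3. updsimp2. reflexivity. }
 apply s3_isdz, Hpsi. Qed.
Lemma B33 u : pds (3%nat::3%nat::nil) (Lv Lam) u = 0.
Proof. change (pds (3%nat::3%nat::nil) (Lv Lam) u) with (pd 3 (pd 3 (Lv Lam)) u).
 apply (pd_via _ 3 u (fun s => psi (u 0%nat) (u 1%nat) (u 2%nat))).
 { intro s. rewrite B3. updsimp2. reflexivity. }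
 eapply is_derive_eq; [apply is_derive_const|reflexivity]. Qed.
Lemma B333 u : pds (3%nat::3%nat::3%nat::nil) (Lv Lam) u = 0.
Proof. change (pds (3%nat::3%nat::3%nat::nil) (Lv Lam) u) with (pd 3 (pds (3%nat::3%nat::nil) (Lv Lam)) u).
 apply pd_zero. exact B33. Qed.

Lemma backward : is_multiplier c0 delta beta Lam.
Proof. intro J.
 replace (fun J' => lam_jet Lam J' * KZK_E c0 delta beta J')
   with (fun J => den c0 delta beta (fun _ => Lv Lam) J LE)
   by (apply functional_extensionality; intro; symmetry; apply LE_den).
 rewrite (pipeline _ _ _ _ (fun _ => HL) LE J K4 (fun _ => None) eq_refl HK5)
   by (intros ? ? HH; discriminate HH).
 rewrite r5_eq. unfold r5. simpl. rewrite B33, B333, B23, B11, B00.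
 set (x := vec J 0%nat). set (y := vec J 1%nat). set (z := vec J 2%nat). set (t := vec J 3%nat).
 assert (E1 := P1 x y z). assert (E2 := P2 x y z).
 replace (d3x (d3x phi) x y z) with (2 / c0 * d3z psi x y z - d3y (d3y phi) x y z) by lra.
 replace (d3x (d3x psi) x y z) with (- d3y (d3y psi) x y z) by lra.
 field. lra.
Qed.
End Bwd.

Definition v4 (x y z t : R) : nat -> R := fun i => match i with 0 => x | 1 => y | 2 => z | _ => t end.

Lemma s4_dx F : smooth4 F -> smooth4 (d4x F).
Proof. intros H. exact (smooth_pd 4 _ 0 H ltac:(lia)). Qed.
Lemma s4_dy F : smooth4 F -> smooth4 (d4y F).
Proof. intros H. exact (smooth_pd 4 _ 1 H ltac:(lia)). Qed.
Lemma s4_dz F : smooth4 F -> smooth4 (d4z F).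
Proof. intros H. exact (smooth_pd 4 _ 2 H ltac:(lia)). Qed.
Lemma s4_dt F : smooth4 F -> smooth4 (d4t F).
Proof. intros H. exact (smooth_pd 4 _ 3 H ltac:(lia)). Qed.
Lemma s4_isx F x y z t : smooth4 F -> is_derive (fun s => F s y z t) x (d4x F x y z t).
Proof. intros H. apply Derive_correct.
 exact (proj2 (H nil (List.Forall_nil _)) (v4 x y z t) 0%nat ltac:(lia)). Qed.
Lemma s4_isy F x y z t : smooth4 F -> is_derive (fun s => F x s z t) y (d4y F x y z t).
Proof. intros H. apply Derive_correct.
 exact (proj2 (H nil (List.Forall_nil _)) (v4 x y z t) 1%nat ltac:(lia)). Qed.
Lemma s4_isz F x y z t : smooth4 F -> is_derive (fun s => F x y s t) z (d4z F x y z t).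
Proof. intros H. apply Derive_correct.
 exact (proj2 (H nil (List.Forall_nil _)) (v4 x y z t) 2%nat ltac:(lia)). Qed.
Lemma s4_ist F x y z t : smooth4 F -> is_derive (fun s => F x y z s) t (d4t F x y z t).
Proof. intros H. apply Derive_correct.
 exact (proj2 (H nil (List.Forall_nil _)) (v4 x y z t) 3%nat ltac:(lia)). Qed.

Lemma s4_cont2 F x y z t : smooth4 F -> continuity_2d_pt (fun u v => F x y u v) z t.
Proof. intros H eps.
 destruct (proj1 (H nil (List.Forall_nil _)) (v4 x y z t) eps (cond_pos eps)) as [del [Hdel Hw]].
 exists (mkposreal del Hdel). intros u v Hu Hv. simpl in Hu, Hv.
 apply (Hw (v4 x y u v)). intros i Hi.
 destruct i as [|[|[|[|i]]]]; simpl; try lia; auto; rewrite Rminus_diag, Rabs_R0; auto.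
Qed.

Lemma schwarz_zt p x y z t : smooth4 p -> d4z (d4t p) x y z t = d4t (d4z p) x y z t.
Proof. intros Hp.
 apply (Schwarz (fun u v => p x y u v) z t).
 - exists (mkposreal 1 Rlt_0_1). intros u v _ _. repeat split.
   + eexists; apply (s4_isz p x y u v Hp).
   + eexists; apply (s4_ist p x y u v Hp).
   + eexists; apply (s4_isz (d4t p) x y u v (s4_dt _ Hp)).
   + eexists; apply (s4_ist (d4z p) x y u v (s4_dz _ Hp)).
 - apply (s4_cont2 (d4z (d4t p))). apply s4_dz, s4_dt, Hp.
 - apply (s4_cont2 (d4t (d4z p))). apply s4_dt, s4_dz, Hp.
Qed.

Lemma L_t (A B C Z : R -> R) a b d be c t dA dB dC dZ :
  is_derive A t dA -> is_derive B t dB -> is_derive C t dC -> is_derive Z t dZ ->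
  is_derive (fun s => (a + s*b)*(d*C s + 2*be*A s*B s - 2*c^3*Z s) - b*(d*B s + be*(A s)^2)) t
   (b*(d*C t + 2*be*A t*B t - 2*c^3*Z t) + (a + t*b)*(d*dC + 2*be*(dA*B t + A t * dB) - 2*c^3*dZ) - b*(d*dB + be*2*A t*dA)).
Proof. intros HA HB HC HZ. auto_derive.
 - repeat split; eexists; eauto.
 - rewrite (is_derive_unique (fun x : R => A x) _ _ HA), (is_derive_unique (fun x : R => B x) _ _ HB),
   (is_derive_unique (fun x : R => C x) _ _ HC), (is_derive_unique (fun x : R => Z x) _ _ HZ). ring.
Qed.

Lemma L_x (F G F1 G1 P Px : R -> R) c t x dF dG dF1 dG1 dP dPx :
  is_derive F x dF -> is_derive G x dG -> is_derive F1 x dF1 -> is_derive G1 x dG1 ->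
  is_derive P x dP -> is_derive Px x dPx ->
  is_derive (fun s => c ^ 4 * ((F s + t * G s) * Px s - P s * (F1 s + t * G1 s))) x
    (c ^ 4 * ((dF + t * dG) * Px x + (F x + t * G x) * dPx - dP * (F1 x + t * G1 x)
              - P x * (dF1 + t * dG1))).
Proof. intros H1 H2 H3 H4 H5 H6. auto_derive.
 - repeat split; eexists; eauto.
 - rewrite (is_derive_unique (fun x : R => F x) _ _ H1), (is_derive_unique (fun x : R => G x) _ _ H2),
   (is_derive_unique (fun x : R => F1 x) _ _ H3), (is_derive_unique (fun x : R => G1 x) _ _ H4),
   (is_derive_unique (fun x : R => P x) _ _ H5), (is_derive_unique (fun x : R => Px x) _ _ H6). ring.
Qed.

Lemma L_z (P S : R -> R) c z dP dS :
  is_derive P z dP -> is_derive S z dS ->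
  is_derive (fun s => 2 * c ^ 3 * P s * S s) z (2 * c ^ 3 * (dP * S z + P z * dS)).
Proof. intros H1 H2. auto_derive.
 - repeat split; eexists; eauto.
 - rewrite (is_derive_unique (fun x : R => P x) _ _ H1), (is_derive_unique (fun x : R => S x) _ _ H2). ring.
Qed.

Lemma L_sq (A : R -> R) t dA : is_derive A t dA -> is_derive (fun s => (A s) ^ 2) t (2 * A t * dA).
Proof. intros H. auto_derive.
 - eexists; eauto.
 - rewrite (is_derive_unique (fun x : R => A x) _ _ H). ring.
Qed.

Lemma L_pr (A B : R -> R) t dA dB : is_derive A t dA -> is_derive B t dB ->
  is_derive (fun s => 2 * A s * B s) t (2 * (dA * B t + A t * dB)).
Proof. intros H1 H2. auto_derive.
 - repeat split; eexists; eauto.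
 - rewrite (is_derive_unique (fun x : R => A x) _ _ H1), (is_derive_unique (fun x : R => B x) _ _ H2). ring.
Qed.

Section Cons.
Variables (c0 delta beta : R) (phi psi : R -> R -> R -> R) (p : R -> R -> R -> R -> R).
Hypothesis (Hc0 : 0 < c0).
Hypothesis (Hphi : smooth3 phi) (Hpsi : smooth3 psi) (Hp : smooth4 p).
Hypothesis P1 : forall x y z, d3x (d3x phi) x y z + d3y (d3y phi) x y z = 2 / c0 * d3z psi x y z.
Hypothesis P2 : forall x y z, d3x (d3x psi) x y z + d3y (d3y psi) x y z = 0.
Hypothesis HK : forall x y z t, KZK_op c0 delta beta p x y z t = 0.

Lemma dTt x y z t : d4t (Tt c0 delta beta phi psi p) x y z t =
  psi x y z * (delta * d4t (d4t p) x y z t + 2 * beta * p x y z t * d4t p x y z t - 2 * c0 ^ 3 * d4z p x y z t)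
  + (phi x y z + t * psi x y z) * (delta * d4t (d4t (d4t p)) x y z t
      + 2 * beta * (d4t p x y z t * d4t p x y z t + p x y z t * d4t (d4t p) x y z t)
      - 2 * c0 ^ 3 * d4t (d4z p) x y z t)
  - psi x y z * (delta * d4t (d4t p) x y z t + beta * 2 * p x y z t * d4t p x y z t).
Proof. change (d4t (Tt c0 delta beta phi psi p) x y z t) with
   (Derive (fun s => Tt c0 delta beta phi psi p x y z s) t).
 apply is_derive_unique. unfold Tt.
 apply (L_t (fun s => p x y z s) (fun s => d4t p x y z s) (fun s => d4t (d4t p) x y z s)
   (fun s => d4z p x y z s)).
 - apply s4_ist, Hp. - apply s4_ist, s4_dt, Hp. - apply s4_ist, s4_dt, s4_dt, Hp.
 - apply s4_ist, s4_dz, Hp.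
Qed.

Lemma dTx x y z t : d4x (Tx c0 phi psi p) x y z t =
  c0 ^ 4 * ((d3x phi x y z + t * d3x psi x y z) * d4x p x y z t
     + (phi x y z + t * psi x y z) * d4x (d4x p) x y z t
     - d4x p x y z t * (d3x phi x y z + t * d3x psi x y z)
     - p x y z t * (d3x (d3x phi) x y z + t * d3x (d3x psi) x y z)).
Proof. change (d4x (Tx c0 phi psi p) x y z t) with
   (Derive (fun s => Tx c0 phi psi p s y z t) x).
 apply is_derive_unique. unfold Tx.
 apply (L_x (fun s => phi s y z) (fun s => psi s y z) (fun s => d3x phi s y z) (fun s => d3x psi s y z)
   (fun s => p s y z t) (fun s => d4x p s y z t)).
 - apply s3_isdx, Hphi. - apply s3_isdx, Hpsi. - apply s3_isdx, s3_dx, Hphi.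
 - apply s3_isdx, s3_dx, Hpsi. - apply s4_isx, Hp. - apply s4_isx, s4_dx, Hp.
Qed.

Lemma dTy x y z t : d4y (Ty c0 phi psi p) x y z t =
  c0 ^ 4 * ((d3y phi x y z + t * d3y psi x y z) * d4y p x y z t
     + (phi x y z + t * psi x y z) * d4y (d4y p) x y z t
     - d4y p x y z t * (d3y phi x y z + t * d3y psi x y z)
     - p x y z t * (d3y (d3y phi) x y z + t * d3y (d3y psi) x y z)).
Proof. change (d4y (Ty c0 phi psi p) x y z t) with
   (Derive (fun s => Ty c0 phi psi p x s z t) y).
 apply is_derive_unique. unfold Ty.
 apply (L_x (fun s => phi x s z) (fun s => psi x s z) (fun s => d3y phi x s z) (fun s => d3y psi x s z)
   (fun s => p x s z t) (fun s => d4y p x s z t)).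
 - apply s3_isdy, Hphi. - apply s3_isdy, Hpsi. - apply s3_isdy, s3_dy, Hphi.
 - apply s3_isdy, s3_dy, Hpsi. - apply s4_isy, Hp. - apply s4_isy, s4_dy, Hp.
Qed.

Lemma dTz x y z t : d4z (Tz c0 psi p) x y z t =
  2 * c0 ^ 3 * (d4z p x y z t * psi x y z + p x y z t * d3z psi x y z).
Proof. change (d4z (Tz c0 psi p) x y z t) with (Derive (fun s => Tz c0 psi p x y s t) z).
 apply is_derive_unique. unfold Tz.
 apply (L_z (fun s => p x y s t) (fun s => psi x y s)).
 - apply s4_isz, Hp. - apply s3_isdz, Hpsi.
Qed.

Lemma dsq x y z t : d4t (d4t (fun x' y' z' t' => (p x' y' z' t') ^ 2)) x y z t =
  2 * (d4t p x y z t * d4t p x y z t + p x y z t * d4t (d4t p) x y z t).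
Proof.
 assert (E : forall s, d4t (fun x' y' z' t' => (p x' y' z' t') ^ 2) x y z s = 2 * p x y z s * d4t p x y z s).
 { intro s. change (d4t (fun x' y' z' t' => (p x' y' z' t') ^ 2) x y z s) with
     (Derive (fun r => (p x y z r) ^ 2) s).
   apply is_derive_unique. apply (L_sq (fun r => p x y z r)). apply s4_ist, Hp. }
 change (d4t (d4t (fun x' y' z' t' => (p x' y' z' t') ^ 2)) x y z t) with
   (Derive (fun s => d4t (fun x' y' z' t' => (p x' y' z' t') ^ 2) x y z s) t).
 rewrite (Derive_ext _ _ _ E). apply is_derive_unique.
 apply (L_pr (fun s => p x y z s) (fun s => d4t p x y z s)).
 - apply s4_ist, Hp. - apply s4_ist, s4_dt, Hp.
Qed.

Lemma conservation x y z t :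
       d4t (Tt c0 delta beta phi psi p) x y z t
       + d4x (Tx c0 phi psi p) x y z t
       + d4y (Ty c0 phi psi p) x y z t
       + d4z (Tz c0 psi p) x y z t = 0.
Proof. rewrite dTt, dTx, dTy, dTz.
 pose proof (HK x y z t) as K. unfold KZK_op in K. rewrite dsq in K.
 rewrite (schwarz_zt p x y z t Hp) in K.
 assert (E1 := P1 x y z). assert (E2 := P2 x y z).
 replace (d3x (d3x phi) x y z) with (2 / c0 * d3z psi x y z - d3y (d3y phi) x y z) by lra.
 replace (d3x (d3x psi) x y z) with (- d3y (d3y psi) x y z) by lra.
 transitivity ((phi x y z + t * psi x y z) *
   (delta * d4t (d4t (d4t p)) x y z t +
    beta * (2 * (d4t p x y z t * d4t p x y z t + p x y z t * d4t (d4t p) x y z t)) -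
    2 * c0 ^ 3 * d4t (d4z p) x y z t +
    c0 ^ 4 * (d4x (d4x p) x y z t + d4y (d4y p) x y z t))).
 - field. lra.
 - rewrite K. ring.
Qed.
End Cons.

Theorem mainTheorem3 (c0 delta beta : R)
  (Hc0 : 0 < c0) (Hdelta : 0 < delta) (Hbeta : 0 < beta) :
  (forall Lam : R -> R -> R -> R -> R -> R -> R -> R -> R -> R,
     smooth9 Lam ->
     (is_multiplier c0 delta beta Lam <->
      exists phi psi : R -> R -> R -> R,
        smooth3 phi /\ smooth3 psi /\
        (forall x y z t q qx qy qz qt,
           Lam x y z t q qx qy qz qt = phi x y z + t * psi x y z) /\
        (forall x y z,
           d3x (d3x phi) x y z + d3y (d3y phi) x y z = 2 / c0 * d3z psi x y z) /\
        (forall x y z, d3x (d3x psi) x y z + d3y (d3y psi) x y z = 0)))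
  /\
  (forall (phi psi : R -> R -> R -> R) (p : R -> R -> R -> R -> R),
     smooth3 phi -> smooth3 psi ->
     (forall x y z,
        d3x (d3x phi) x y z + d3y (d3y phi) x y z = 2 / c0 * d3z psi x y z) ->
     (forall x y z, d3x (d3x psi) x y z + d3y (d3y psi) x y z = 0) ->
     smooth4 p ->
     (forall x y z t, KZK_op c0 delta beta p x y z t = 0) ->
     forall x y z t,
       d4t (Tt c0 delta beta phi psi p) x y z t
       + d4x (Tx c0 phi psi p) x y z t
       + d4y (Ty c0 phi psi p) x y z t
       + d4z (Tz c0 psi p) x y z t = 0).
Proof.
  split.
  - intros Lam HL9. split.
    + intro HM. exact (forward c0 delta beta Lam Hc0 Hdelta Hbeta HL9 HM).
    + intros [phi [psi [Hphi [Hpsi [HLf [P1 P2]]]]]].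
      exact (backward c0 delta beta Lam phi psi Hc0 HL9 Hphi Hpsi HLf P1 P2).
  - intros phi psi p Hphi Hpsi P1 P2 Hp HK x y z t.
    exact (conservation c0 delta beta phi psi p Hc0 Hphi Hpsi Hp P1 P2 HK x y z t).
Qed.
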